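(* In the two-source model, let $t\in\mathbb N$ and let $(U_t,X_t,Q_t)$ be any joint distribution (with the given marginal of $(U_t,X_t)$) such that $X_t\in Q_t$ almost surely and $Q_t$ is independent of $U_t$. Then $$\mathbb E|Q_t|\;\ge\;2-\pi_t(A)-\pi_t(B).$$ Consequently, any scheme satisfying decodability and the privacy constraint $I(X_{\mathcal B_t};Q_0,\dots,Q_t)=0$ has $1/R_t\ge 2-\pi_t(A)-\pi_t(B)$.
   Context: Requests $X_t\in\{A,B\}$, $t\ge0$, form a Markov chain with transition matrix $M$; privacy modes $F_t$ are a known sequence with $F_0=\mathrm{ON}$. Queries take values in $\{\{A\},\{B\},\{A,B\}\}$ with download cost $|Q_t|L$, and the rate satisfies $R_t\le L/(L\,\mathbb E|Q_t|)$. $\mathcal B_t=\{i\le t: F_i=\mathrm{ON}\}\cup\{i: i\ge t+1\}$, $F^-(t)=\max\{i\le t: F_i=\mathrm{ON}\}$, $U_t=(X_{F^-(t)},X_{t+1})$ (note $F^-(t),t+1\in\mathcal B_t$), $p(x\mid u)=P(X_t=x\mid U_t=u)$, and $\pi_t(x)=\min_u p(x\mid u)$ over $u\in\{A,B\}^2$ with $P(U_t=u)>0$. *)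

(* Defs.v *)
From HB Require Import structures.
From mathcomp Require Import all_boot all_order all_algebra.
Set Implicit Arguments. Unset Strict Implicit. Unset Printing Implicit Defensive.
Import Order.TTheory GRing.Theory Num.Theory.
Local Open Scope ring_scope.

Inductive req := A | B.
Definition req2bool (r : req) : bool := if r is A then true else false.
Definition bool2req (b : bool) : req := if b then A else B.
Lemma req_can : cancel req2bool bool2req. Proof. by case. Qed.
HB.instance Definition _ := Finite.copy req (can_type req_can).

Section Model.
Variable R : realFieldType.

(* M : transition matrix (M a b = P(X_{s+1}=b | X_s=a)), mu : law of X_0. *)
Definition stochastic (M : req -> req -> R) :=
  (forall a b, 0 <= M a b) /\ (forall a, \sum_(b : req) M a b = 1).
Definition distrib (mu : req -> R) :=
  (forall a, 0 <= mu a) /\ \sum_(a : req) mu a = 1.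

Fixpoint Mpow (M : req -> req -> R) (k : nat) (a b : req) : R :=
  match k with
  | 0 => (a == b)%:R
  | k'.+1 => \sum_(c : req) Mpow M k' a c * M c b
  end.

Definition muAt (M : req -> req -> R) (mu : req -> R) (s : nat) (a : req) : R :=
  \sum_(c : req) mu c * Mpow M s c a.

(* Privacy modes: F i = true means F_i = ON. *)
(* F^-(t) = max { i <= t : F_i = ON } (equals 0 when F 0 = ON and no other). *)
Fixpoint Fminus (F : nat -> bool) (t : nat) : nat :=
  match t with
  | 0 => 0
  | t'.+1 => if F t then t else Fminus F t'
  end.

Definition inB (F : nat -> bool) (t i : nat) : bool := ((i <= t)%N && F i) || (t < i)%N.

(* joint law of (U_t, X_t) with U_t = (X_{F^-(t)}, X_{t+1}) *)
Definition pUX (M : req -> req -> R) (mu : req -> R) (F : nat -> bool) (t : nat)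
  (u : req * req) (x : req) : R :=
  muAt M mu (Fminus F t) u.1 * Mpow M (t - Fminus F t) u.1 x * M x u.2.

Definition pU M mu F t (u : req * req) : R := \sum_(x : req) pUX M mu F t u x.

Definition pcond M mu F t (x : req) (u : req * req) : R := pUX M mu F t u x / pU M mu F t u.

(* pi_t(x) = min over u with P(U_t=u)>0 of p(x|u); the neutral element 1 is harmless
   since conditional probabilities are <= 1. *)
Definition pi_t M mu F t (x : req) : R :=
  \big[Num.min/1]_(u : req * req | 0 < pU M mu F t u) pcond M mu F t x u.

Definition pathProb (M : req -> req -> R) (mu : req -> R) (n : nat)
  (xs : {ffun 'I_n.+1 -> req}) : R :=
  mu (xs ord0) * \prod_(i < n) M (xs (inord i)) (xs (inord i.+1)).

End Model.

(* Main.v *)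
Require Import Defs.
From HB Require Import structures.
From mathcomp Require Import all_boot all_order all_algebra.
From mathcomp Require Import lra ring zify.
Import Order.TTheory GRing.Theory Num.Theory.
Local Open Scope ring_scope.


Section P1.
Variable R : realFieldType.

Lemma sum_req (f : req -> R) : \sum_(x : req) f x = f A + f B.
Proof.
rewrite (bigD1 A) //= (big_pred1 B) // => x /=; by case: x.
Qed.

Lemma sum_ind (T : finType) (G : T -> R) (s : T) :
  \sum_(q : T) G q * (q == s)%:R = G s.
Proof.
rewrite (bigD1 s) //= eqxx mulr1 big1 ?addr0 // => q /negbTE ->; by rewrite mulr0.
Qed.

Lemma card_bound (q : {set req}) (x : req) : x \in q ->
  2 - (q == [set A])%:R - (q == [set B])%:R <= #|q|%:R :> R.
Proof.
move=> xq.
have [/eqP/cards1P [y ->]|n1] := eqVneq #|q| 1%N.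
  rewrite cards1; case: y => /=.
  - have -> : ([set A] == [set B]) = false.
      apply/negbTE/negP => /eqP/setP/(_ A); by rewrite !inE.
    rewrite eqxx /=; lra.
  - have -> : ([set B] == [set A]) = false.
      apply/negbTE/negP => /eqP/setP/(_ A); by rewrite !inE.
    rewrite eqxx /=; lra.
have q0 : (0 < #|q|)%N by rewrite card_gt0; apply/set0Pn; exists x.
have q2 : (2 <= #|q|)%N by case: #|q| n1 q0 => [|[|n]].
have : (2%:R : R) <= #|q|%:R by rewrite ler_nat.
have a0 : (0 : R) <= (q == [set A])%:R by rewrite ler0n.
have b0 : (0 : R) <= (q == [set B])%:R by rewrite ler0n.
lra.
Qed.

Lemma part1 (M : req -> req -> R) (mu : req -> R) (F : nat -> bool) (t : nat)
  (P : (req * req) -> req -> {set req} -> R) :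
     (forall u x (q : {set req}), 0 <= P u x q) ->
     (forall u x, \sum_(q : {set req}) P u x q = pUX M mu F t u x) ->
     (forall u (x : req) (q : {set req}), x \notin q -> P u x q = 0) ->
     (forall u (q : {set req}), \sum_(x : req) P u x q =
        pU M mu F t u * \sum_(u' : req * req) \sum_(x : req) P u' x q) ->
     2 - pi_t M mu F t A - pi_t M mu F t B <=
       \sum_(u : req * req) \sum_(x : req) \sum_(q : {set req}) P u x q * #|q|%:R.
Proof.
move=> H1 H2 H3 H4.
set Pq := fun q => \sum_(u : req * req) \sum_(x : req) P u x q.
set S := \sum_(q : {set req}) Pq q.
have pUE u : pU M mu F t u = \sum_(x : req) \sum_(q : {set req}) P u x q.
  by rewrite /pU; apply: eq_bigr => x _; rewrite H2.
have pU0 u : 0 <= pU M mu F t u by rewrite pUE; do 2 (apply: sumr_ge0 => ? _); exact: H1.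
have SE : S = \sum_(u : req * req) pU M mu F t u.
  rewrite /S /Pq exchange_big; apply: eq_bigr => u _.
  by rewrite pUE exchange_big.
have PqS q : Pq q = S * Pq q.
  rewrite {1}/Pq (eq_bigr (fun u => pU M mu F t u * Pq q)); last by move=> u _; rewrite H4.
  by rewrite -mulr_suml SE.
have Pq0 q : 0 <= Pq q by do 2 (apply: sumr_ge0 => ? _); exact: H1.
have E0 : 0 <= \sum_(u : req * req) \sum_(x : req) \sum_(q : {set req}) P u x q * #|q|%:R.
  do 3 (apply: sumr_ge0 => ? _); apply: mulr_ge0 => //; exact: ler0n.
have [S0|Sn0] := eqVneq S 0.
  have allz u : pU M mu F t u = 0.
    move: S0; rewrite SE => /eqP; rewrite psumr_eq0 => [/allP/(_ u (mem_index_enum _))/implyP/(_ isT)/eqP //|i _].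
    exact: pU0.
  have pi1 x : pi_t M mu F t x = 1.
    rewrite /pi_t big_pred0 // => u /=; by rewrite allz ltxx.
  rewrite !pi1; lra.
have S1 : S = 1.
  have : S = S * S by rewrite {1}/S (eq_bigr (fun q => S * Pq q)) ?mulr_sumr // => q _; rewrite -PqS.
  move=> /eqP; rewrite -subr_eq0 -{1}(mulr1 S) -mulrBr mulf_eq0 (negbTE Sn0) /= subr_eq0.
  by move=> /eqP ->.
have Ple (s : {set req}) : Pq s <= 1.
  rewrite -S1 /S (bigD1 s) //= lerDl; apply: sumr_ge0 => ? _; exact: Pq0.
have Pi (y : req) : Pq [set y] <= pi_t M mu F t y.
  rewrite /pi_t; apply: le_bigmin => // u Hu.
  rewrite /pcond ler_pdivlMr // mulrC -H4 -H2.
  have -> : \sum_x P u x [set y] = P u y [set y].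
    rewrite sum_req; case: y => /=; [rewrite (H3 u B) ?addr0 // | rewrite (H3 u A) ?add0r //]; by rewrite inE.
  rewrite (bigD1 [set y]) //= lerDl; apply: sumr_ge0 => ? _; exact: H1.
have low : 2 * S - Pq [set A] - Pq [set B] <=
  \sum_(u : req * req) \sum_(x : req) \sum_(q : {set req}) P u x q * #|q|%:R.
  have -> : 2 * S - Pq [set A] - Pq [set B] =
     \sum_(u : req * req) \sum_(x : req) \sum_(q : {set req})
        P u x q * (2 - (q == [set A])%:R - (q == [set B])%:R).
    have SS : S = \sum_(u : req * req) \sum_(x : req) \sum_(q : {set req}) P u x q.
      rewrite /S /Pq exchange_big; apply: eq_bigr => u _; by rewrite exchange_big.
    rewrite SS /Pq mulr_sumr -!sumrB; apply: eq_bigr => u _.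
    rewrite mulr_sumr -!sumrB; apply: eq_bigr => x _.
    rewrite -(@sum_ind _ (P u x) [set A]) -(@sum_ind _ (P u x) [set B]) mulr_sumr -!sumrB.
    apply: eq_bigr => q _; ring.
  apply: ler_sum => u _; apply: ler_sum => x _; apply: ler_sum => q _.
  case: (boolP (x \in q)) => [xq|xq]; last by rewrite H3 // !mul0r.
  apply: ler_wpM2l; [exact: H1 | exact: card_bound xq].
move: (Pi A) (Pi B) low; rewrite S1; lra.
Qed.
End P1.

Section Mk.
Variable R : realFieldType.
Variable M : req -> req -> R.
Variable mu : req -> R.

Section Ext.
Variable n : nat.
Definition ext (p : {ffun 'I_n.+1 -> req} * req) : {ffun 'I_n.+2 -> req} :=
  [ffun i : 'I_n.+2 => if (i < n.+1)%N then p.1 (inord i) else p.2].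
Definition restr (xs : {ffun 'I_n.+2 -> req}) : {ffun 'I_n.+1 -> req} * req :=
  ([ffun j : 'I_n.+1 => xs (inord j)], xs ord_max).

Lemma ext_bij : bijective ext.
Proof.
exists restr.
- case=> xs b; rewrite /restr /ext; congr pair.
    apply/ffunP => j; rewrite !ffunE inordK ?ltn_ord //; last by apply: (ltn_trans (ltn_ord j)).
    by rewrite inord_val.
  by rewrite ffunE /= ltnn.
- move=> xs; apply/ffunP => i; rewrite /ext /restr ffunE /=.
  case: ifP => hi; first by rewrite ffunE inordK // inord_val.
  congr (xs _); apply/val_inj => /=; move: (ltn_ord i) hi; rewrite ltnS leq_eqVlt => /orP [/eqP -> //| ->] //.
Qed.

Lemma extE (p : {ffun 'I_n.+1 -> req} * req) (j : nat) : (j < n.+1)%N ->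
  ext p (inord j) = p.1 (inord j).
Proof. by move=> hj; rewrite ffunE inordK ?hj // ltnS ltnW. Qed.

Lemma extL (p : {ffun 'I_n.+1 -> req} * req) : ext p (inord n.+1) = p.2.
Proof. by rewrite ffunE inordK // ltnn. Qed.

Lemma extM (p : {ffun 'I_n.+1 -> req} * req) : ext p ord_max = p.2.
Proof. by rewrite ffunE /= ltnn. Qed.

Lemma pathProb_ext p :
  pathProb M mu (ext p) = pathProb M mu p.1 * M (p.1 ord_max) p.2.
Proof.
rewrite /pathProb big_ord_recr /= mulrA; congr (_ * _ * _).
- have -> : (ord0 : 'I_n.+2) = inord 0 by apply/val_inj; rewrite /= inordK.
  rewrite extE //; congr (mu (p.1 _)); apply/val_inj; by rewrite /= inordK.
- apply: eq_bigr => i _; rewrite !extE ?ltnS ?(ltnW (ltn_ord i)) ?ltn_ord //.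
- rewrite extE // extL; congr (M (p.1 _) _); apply/val_inj; by rewrite /= inordK.
Qed.
End Ext.
Arguments ext {n}.

Variable c : nat -> req -> bool.

Definition alpha (n : nat) (b : req) : R :=
  \sum_(xs : {ffun 'I_n.+1 -> req})
     ([forall i : 'I_n.+1, c i (xs i)] && (xs ord_max == b))%:R * pathProb M mu xs.

Lemma alpha0 b : alpha 0 b = (c 0 b)%:R * mu b.
Proof.
rewrite /alpha (bigD1 [ffun=> b]) //= big1 ?addr0.
  rewrite /pathProb big_ord0 mulr1 !ffunE eqxx andbT.
  have -> : [forall i : 'I_1, c i ([ffun=> b] i)] = c 0 b.
    apply/forallP/idP => [/(_ ord0)|h i]; rewrite ffunE //.
    by rewrite ord1.
  done.
move=> xs hxs; case: (boolP [forall i : 'I_1, _]) => /= _; last by rewrite mul0r.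
case: eqP => [hb|]; last by rewrite mul0r.
case/negP: hxs; apply/eqP/ffunP => i; rewrite ffunE -hb; congr (xs _); apply/val_inj; by rewrite /= (ord1 i).
Qed.

Lemma alphaS n b : alpha n.+1 b = (c n.+1 b)%:R * \sum_(a : req) alpha n a * M a b.
Proof.
rewrite /alpha (reindex (@ext n)); last by apply: onW_bij; exact: ext_bij.
rewrite -(pair_big predT predT (fun (xs : {ffun 'I_n.+1 -> req}) (b' : req) =>
   ([forall i : 'I_n.+2, c i (ext (xs, b') i)] && (ext (xs, b') ord_max == b))%:R * pathProb M mu (ext (xs, b')))) /=.
rewrite (eq_bigr (fun xs : {ffun 'I_n.+1 -> req} => [forall i : 'I_n.+1, c i (xs i)]%:R * pathProb M mu xs * M (xs ord_max) b * (c n.+1 b)%:R)).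
  rewrite -mulr_suml mulrC; congr (_ * _).
  under [RHS]eq_bigr do rewrite mulr_suml.
  rewrite exchange_big; apply: eq_bigr => xs _.
  rewrite (bigD1 (xs ord_max)) //= eqxx andbT big1 ?addr0 // => a /negbTE.
  by rewrite eq_sym => ->; rewrite andbF mul0r mul0r.
move=> xs _.
rewrite (bigD1 b) //= big1 ?addr0; last first.
  move=> b' /negbTE hb; by rewrite extM /= hb andbF mul0r.
rewrite extM /=.
rewrite eqxx andbT pathProb_ext /=.
have -> : [forall i : 'I_n.+2, c i (ext (xs, b) i)] = [forall i : 'I_n.+1, c i (xs i)] && c n.+1 b.
  apply/forallP/andP => [h|[/forallP h hb] i].
    split; last by move: (h ord_max); rewrite extM.
    apply/forallP => j; move: (h (inord j)); rewrite extE //= inordK ?inord_val //.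
    by apply: (ltn_trans (ltn_ord j)).
  rewrite ffunE /=; case: ifP => hi; first by move: (h (inord i)); rewrite inordK.
  have -> : (i : nat) = n.+1 by move: (ltn_ord i) hi; rewrite ltnS leq_eqVlt => /orP [/eqP -> //| ->].
  done.
by case: [forall i, _]; case: (c n.+1 b); rewrite /= ?(mul0r, mul1r, mulr0, mulr1, mulrA).
Qed.
End Mk.
Arguments alpha {R}.
Section Spec.
Variable R : realFieldType.
Variable M : req -> req -> R.
Variable mu : req -> R.

Lemma sum_indl (T : finType) (G : T -> R) (s : T) :
  \sum_(q : T) (q == s)%:R * G q = G s.
Proof.
rewrite (bigD1 s) //= eqxx mul1r big1 ?addr0 // => q /negbTE ->; by rewrite mul0r.
Qed.
Lemma sum_indr (T : finType) (G : T -> R) (s : T) :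
  \sum_(q : T) G q * (q == s)%:R = G s.
Proof.
rewrite (bigD1 s) //= eqxx mulr1 big1 ?addr0 // => q /negbTE ->; by rewrite mulr0.
Qed.

Lemma muAt0 b : muAt M mu 0 b = mu b.
Proof.
rewrite /muAt (bigD1 b) //= eqxx mulr1 big1 ?addr0 // => a /negbTE ->; by rewrite mulr0.
Qed.

Lemma muAtS k b : muAt M mu k.+1 b = \sum_a muAt M mu k a * M a b.
Proof.
rewrite /muAt /=; under eq_bigr do rewrite mulr_sumr.
rewrite exchange_big; apply: eq_bigr => a _; rewrite mulr_suml; apply: eq_bigr => c' _.
by rewrite mulrA.
Qed.

Variables (f t : nat) (u1 u2 x : req).
Hypothesis hf : (f <= t)%N.

Definition cc (i : nat) (a : req) : bool :=
  [&& (i == f) ==> (a == u1), (i == t) ==> (a == x) & (i == t.+1) ==> (a == u2)].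

Lemma alpha_low k b : (k <= t)%N ->
  alpha M mu cc k b = (if (k < f)%N then muAt M mu k b else muAt M mu f u1 * Mpow M (k - f) u1 b)
     * ((k == t) ==> (b == x))%:R.
Proof.
elim: k b => [|k IH] b hk.
  rewrite alpha0 /cc.
  have -> : (0 == t.+1) = false by [].
  case: (posnP f) => [f0|fp].
    rewrite f0 /= muAt0 eq_sym.
    case: (eqVneq u1 b) => [->|nb] /=; last by rewrite !(mul0r, mulr0).
    by case: (_ ==> _); rewrite /= ?(mul0r, mulr0, mul1r, mulr1).
  have -> : (0 == f) = false by apply/eqP; lia.
  have -> : (0 == t) = false by apply/eqP; lia.
  by rewrite /= muAt0 mul1r mulr1.
rewrite alphaS.
have hk' : (k <= t)%N by apply: ltnW.
have kt : (k == t) = false by apply/eqP; lia.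
have IH' a : alpha M mu cc k a = (if (k < f)%N then muAt M mu k a else muAt M mu f u1 * Mpow M (k - f) u1 a).
  by rewrite IH // kt mulr1.
under eq_bigr do rewrite IH'.
have e1 : (k.+1 == t.+1) = false by apply/eqP; lia.
rewrite /cc e1 /= andbT.
case: (ltngtP k.+1 f) => hkf.
- have -> : (k.+1 == t) = false by apply/eqP; lia.
  by rewrite /= mul1r mulr1 muAtS.
- rewrite /= mulrC; congr (_ * _).
  rewrite subSn /=; last lia.
  rewrite mulr_sumr; apply: eq_bigr => i _; by rewrite mulrA.
- rewrite -muAtS hkf subnn /= eq_sym.
  case: (eqVneq u1 b) => [->|nb] /=; last by rewrite !(mul0r, mulr0).
  by rewrite mulr1 mulrC.
Qed.

Lemma alpha_sum :
  \sum_(b : req) alpha M mu cc t.+1 b = muAt M mu f u1 * Mpow M (t - f) u1 x * M x u2.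
Proof.
have ct b : cc t.+1 b = (b == u2).
  rewrite /cc eqxx /=.
  have -> : (t.+1 == f) = false by apply/eqP; lia.
  have -> : (t.+1 == t) = false by apply/eqP; lia.
  by case: (b == u2).
under eq_bigr do rewrite alphaS ct.
rewrite (@sum_indl _ (fun b => \sum_a alpha M mu cc t a * M a b)).
under eq_bigr do rewrite alpha_low // eqxx ltnNge hf /=.
under eq_bigr do rewrite mulrAC.
by rewrite (@sum_indr _ (fun a => muAt M mu f u1 * Mpow M (t - f) u1 a * M a u2)).
Qed.
End Spec.

Lemma class_avg (R : realFieldType) (T : finType) (V : eqType) (e : T -> T -> bool) (g : T -> V) (u : V)
  (G : T -> R) :
  (forall x, e x x) -> (forall x y, e x y = e y x) -> (forall x y z, e x y -> e y z -> e x z) ->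
  (forall x y, e y x -> g x = g y) ->
  \sum_(x | g x == u) G x =
  \sum_(x | g x == u) (#|[set y | e y x]|%:R)^-1 * \sum_(y | e y x) G y.
Proof.
move=> er es et eg.
under [RHS]eq_bigr do rewrite mulr_sumr.
rewrite (exchange_big_dep (fun y => g y == u)); last first.
  by move=> x y /eqP <- /eg ->.
apply: eq_bigr => y gy /=.
rewrite (eq_bigr (fun x => (#|[set z | e z y]|%:R)^-1 * G y)); last first.
  move=> x /andP [_ eyx]; congr (_^-1 * _); congr (_%:R); apply: eq_card => z.
  rewrite !inE; apply/idP/idP => h; [apply: et h _; by rewrite es | exact: et h eyx].
rewrite -mulr_suml sumr_const.
have -> : #|[pred x | (g x == u) && e y x]| = #|[set z | e z y]|.
  apply: eq_card => z; rewrite !inE /=.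
  rewrite (es z y); case: (boolP (e y z)) => h; rewrite ?andbT ?andbF //.
  by rewrite (eg _ _ h).
have hp : (0 < #|[set z | e z y]|)%N by apply/card_gt0P; exists y; rewrite inE.
rewrite -[_ *+ _]mulr_natr mulVf ?mul1r //.
by rewrite pnatr_eq0 -lt0n.
Qed.

Lemma cc_forall (f t : nat) (u1 u2 x : req) (hf : (f <= t)%N) (xs : {ffun 'I_t.+2 -> req}) :
  [forall i : 'I_t.+2, cc f t u1 u2 x i (xs i)] =
  ((xs (inord f), xs ord_max) == (u1, u2)) && (xs (inord t) == x).
Proof.
apply/forallP/andP => [h|[/eqP [h1 h2] /eqP h3] i].
  split.
    apply/eqP; congr pair.
      move: (h (inord f)); rewrite /cc inordK ?eqxx; last lia.
      by case/and3P => /= /eqP.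
    move: (h ord_max); rewrite /cc /= eqxx.
    by case/and3P => _ _ /eqP.
  move: (h (inord t)); rewrite /cc inordK ?eqxx; last lia.
  by case/and3P => _ /implyP /(_ isT).
rewrite /cc; apply/and3P; split; apply/implyP => /eqP hi.
- have -> : i = inord f by apply/val_inj; rewrite /= inordK; lia.
  by rewrite h1.
- have -> : i = inord t by apply/val_inj; rewrite /= inordK; lia.
  by rewrite h3.
- have -> : i = ord_max by apply/val_inj; rewrite /=; lia.
  by rewrite h2.
Qed.

Lemma Fminus_le (F : nat -> bool) t : (Fminus F t <= t)%N.
Proof. elim: t => [//|t IH] /=; case: ifP => // _; exact: leqW. Qed.

Lemma Fminus_on (F : nat -> bool) t : F 0%N -> F (Fminus F t).
Proof. move=> F0; elim: t => [//|t IH] /=; by case: ifP. Qed.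

Lemma ML (R : realFieldType) (M : req -> req -> R) (mu : req -> R) (F : nat -> bool) (t : nat)
  (u : req * req) (x : req) :
  \sum_(xs : {ffun 'I_t.+2 -> req} | ((xs (inord (Fminus F t)), xs ord_max) == u) && (xs (inord t) == x))
     pathProb M mu xs = pUX M mu F t u x.
Proof.
case: u => u1 u2.
have hf := Fminus_le F t.
set f := Fminus F t in hf *.
rewrite /pUX /= -(@alpha_sum R M mu f t u1 u2 x hf) /alpha exchange_big big_mkcond /=.
apply: eq_bigr => xs _.
rewrite -(@cc_forall f t u1 u2 x hf xs).
case: [forall i, _] => /=.
  rewrite (eq_bigr (fun b => (b == xs ord_max)%:R * pathProb M mu xs)) ?sum_indl // => b _.
  by rewrite eq_sym.
by rewrite big1 // => b _; rewrite mul0r.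
Qed.

Lemma partg (R : realFieldType) (I J : finType) (p : I -> J) (Pr : pred I) (G : I -> R) :
  \sum_(j : J) \sum_(i | Pr i && (p i == j)) G i = \sum_(i | Pr i) G i.
Proof. by rewrite [RHS](partition_big p predT). Qed.
Lemma partg1 (R : realFieldType) (I J : finType) (p : I -> J) (G : I -> R) :
  \sum_(j : J) \sum_(i | p i == j) G i = \sum_i G i.
Proof. by rewrite [RHS](partition_big p predT). Qed.

Theorem mainTheorem4 (R : realFieldType) (M : req -> req -> R) (mu : req -> R)
  (F : nat -> bool) (t : nat) :
  stochastic M -> distrib mu -> F 0%N = true ->
  (forall P : (req * req) -> req -> {set req} -> R,
     (forall u x (q : {set req}), 0 <= P u x q) ->
     (forall u x, \sum_(q : {set req}) P u x q = pUX M mu F t u x) ->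
     (forall u (x : req) (q : {set req}), x \notin q -> P u x q = 0) ->
     (forall u (q : {set req}), \sum_(x : req) P u x q =
        pU M mu F t u * \sum_(u' : req * req) \sum_(x : req) P u' x q) ->
     2 - pi_t M mu F t A - pi_t M mu F t B <=
       \sum_(u : req * req) \sum_(x : req) \sum_(q : {set req}) P u x q * #|q|%:R)
  /\
  (forall (Ps : {ffun 'I_t.+2 -> req} -> {ffun 'I_t.+1 -> {set req}} -> R)
          (L Rt : R),
     (forall (xs : {ffun 'I_t.+2 -> req}) (qs : {ffun 'I_t.+1 -> {set req}}), 0 <= Ps xs qs) ->
     (forall (xs : {ffun 'I_t.+2 -> req}), \sum_(qs : {ffun 'I_t.+1 -> {set req}}) Ps xs qs
                   = pathProb M mu xs) ->
     (forall (xs : {ffun 'I_t.+2 -> req}) (qs : {ffun 'I_t.+1 -> {set req}}) (i : 'I_t.+1), xs (widen_ord (leqnSn _) i) \notin qs i ->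
                                  Ps xs qs = 0) ->
     (forall (xs0 : {ffun 'I_t.+2 -> req}) (qs : {ffun 'I_t.+1 -> {set req}}),
        \sum_(xs : {ffun 'I_t.+2 -> req} | [forall i : 'I_t.+2, inB F t i ==> (xs i == xs0 i)]) Ps xs qs =
        (\sum_(xs : {ffun 'I_t.+2 -> req} | [forall i : 'I_t.+2, inB F t i ==> (xs i == xs0 i)])
           \sum_(qs' : {ffun 'I_t.+1 -> {set req}}) Ps xs qs') *
        (\sum_(xs : {ffun 'I_t.+2 -> req}) Ps xs qs)) ->
     0 < L -> 0 < Rt ->
     Rt <= L / (L * \sum_(xs : {ffun 'I_t.+2 -> req})
                      \sum_(qs : {ffun 'I_t.+1 -> {set req}})
                         Ps xs qs * #|qs ord_max|%:R) ->
     2 - pi_t M mu F t A - pi_t M mu F t B <= 1 / Rt).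
Proof.
move=> hM hmu F0.
split; first by move=> P; exact: part1.
move=> Ps L Rt Hnn Hmarg Hdec Hpriv L0 Rt0 Hrate.
pose f := Fminus F t.
have hf : (f <= t)%N := Fminus_le F t.
pose fo : 'I_t.+2 := inord f.
pose to : 'I_t.+2 := inord t.
pose U := fun xs : {ffun 'I_t.+2 -> req} => (xs fo, xs ord_max).
pose P := fun (u : req * req) (x : req) (q : {set req}) =>
  \sum_(xs : {ffun 'I_t.+2 -> req} | (U xs == u) && (xs to == x))
     \sum_(qs : {ffun 'I_t.+1 -> {set req}} | qs ord_max == q) Ps xs qs.
pose E := \sum_(xs : {ffun 'I_t.+2 -> req})
             \sum_(qs : {ffun 'I_t.+1 -> {set req}}) Ps xs qs * #|qs ord_max|%:R.
have partq (G : {ffun 'I_t.+1 -> {set req}} -> R) :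
   \sum_(q : {set req}) \sum_(qs : {ffun 'I_t.+1 -> {set req}} | qs ord_max == q) G qs = \sum_qs G qs.
  exact: (@partg1 R _ _ (fun qs : {ffun 'I_t.+1 -> {set req}} => qs ord_max) G).
have partx (G : {ffun 'I_t.+2 -> req} -> R) u :
   \sum_(x : req) \sum_(xs | (U xs == u) && (xs to == x)) G xs = \sum_(xs | U xs == u) G xs.
  exact: (@partg R _ _ (fun xs : {ffun 'I_t.+2 -> req} => xs to) (fun xs => U xs == u) G).
have partu (G : {ffun 'I_t.+2 -> req} -> R) :
   \sum_(u : req * req) \sum_(xs | U xs == u) G xs = \sum_xs G xs.
  exact: (@partg1 R _ _ U G).
have H1 u x q : 0 <= P u x q.
  by apply: sumr_ge0 => xs _; apply: sumr_ge0 => qs _.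
have H2 u x : \sum_q P u x q = pUX M mu F t u x.
  rewrite -ML /P exchange_big /=; apply: eq_bigr => xs _; by rewrite partq Hmarg.
have H3 u x (q : {set req}) : x \notin q -> P u x q = 0.
  move=> xq; apply: big1 => xs /andP [_ /eqP hx]; apply: big1 => qs /eqP hq.
  apply: (Hdec xs qs ord_max).
  have -> : widen_ord (leqnSn t.+1) ord_max = to by apply/val_inj; rewrite /= inordK.
  by rewrite hx hq.
have Wdef u : pU M mu F t u = \sum_(xs | U xs == u) \sum_qs Ps xs qs.
  rewrite /pU; under eq_bigr do rewrite -ML.
  rewrite (partx (@pathProb R M mu t.+1)); apply: eq_bigr => xs _; by rewrite Hmarg.
pose eB := fun a b : {ffun 'I_t.+2 -> req} => [forall i : 'I_t.+2, inB F t i ==> (a i == b i)].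
have er x : eB x x by apply/forallP => i; apply/implyP => _.
have es x y : eB x y = eB y x.
  by apply/forallP/forallP => h i; apply/implyP => hi; rewrite eq_sym; exact: (implyP (h i) hi).
have et x y z : eB x y -> eB y z -> eB x z.
  move=> /forallP h1 /forallP h2; apply/forallP => i; apply/implyP => hi.
  by rewrite (eqP (implyP (h1 i) hi)) (implyP (h2 i) hi).
have inBfo : inB F t fo by rewrite /inB inordK ?hf ?Fminus_on //; lia.
have inBmax : inB F t (ord_max : 'I_t.+2).
  by rewrite /inB; apply/orP; right; exact: ltnSn.
have eg x y : eB y x -> U x = U y.
  move=> /forallP h; rewrite /U; congr pair; apply/eqP; rewrite eq_sym.
    exact: (implyP (h fo) inBfo).
  exact: (implyP (h ord_max) inBmax).
have indep u (qs : {ffun 'I_t.+1 -> {set req}}) : \sum_(xs | U xs == u) Ps xs qs =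
   (\sum_(xs | U xs == u) \sum_qs' Ps xs qs') * \sum_xs Ps xs qs.
  rewrite (@class_avg R _ _ eB U u (fun xs => Ps xs qs) er es et eg).
  rewrite (@class_avg R _ _ eB U u (fun xs => \sum_qs' Ps xs qs') er es et eg) mulr_suml.
  apply: eq_bigr => x _; rewrite -mulrA; congr (_ * _); exact: Hpriv.
have H4 u (q : {set req}) : \sum_x P u x q = pU M mu F t u * \sum_u' \sum_x P u' x q.
  rewrite /P partx exchange_big /=.
  under eq_bigr do rewrite indep.
  rewrite -mulr_sumr Wdef; congr (_ * _).
  rewrite (eq_bigr (fun u' => \sum_(xs | U xs == u') \sum_(qs : {ffun 'I_t.+1 -> {set req}} | qs ord_max == q) Ps xs qs)); last first.
    by move=> u' _; rewrite partx.
  by rewrite partu exchange_big.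
have main := @part1 R M mu F t P H1 H2 H3 H4.
have EE : \sum_u \sum_x \sum_q P u x q * #|q|%:R = E.
  rewrite /E -(partu (fun xs => \sum_qs Ps xs qs * #|qs ord_max|%:R)); apply: eq_bigr => u _.
  rewrite -(partx (fun xs => \sum_qs Ps xs qs * #|qs ord_max|%:R)); apply: eq_bigr => x _.
  rewrite /P; under eq_bigr do rewrite mulr_suml.
  rewrite exchange_big; apply: eq_bigr => xs _.
  rewrite -partq; apply: eq_bigr => q _; rewrite mulr_suml; apply: eq_bigr => qs /eqP -> //.
rewrite EE in main.
have E0 : 0 <= E.
  by apply: sumr_ge0 => xs _; apply: sumr_ge0 => qs _; apply: mulr_ge0 => //; exact: ler0n.
have [Ez|Enz] := eqVneq E 0.
  by move: Hrate; rewrite -/E Ez mulr0 invr0 mulr0 => /(lt_le_trans Rt0); rewrite ltxx.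
have Ep : 0 < E by rewrite lt_def Enz E0.
have hE : L / (L * E) = E^-1 by rewrite invfM mulrA mulfV ?mul1r // gt_eqF.
move: Hrate; rewrite -/E hE => hR.
apply: (le_trans main); rewrite ler_pdivlMr //.
have : Rt * E <= E^-1 * E by rewrite ler_pM2r.
by rewrite mulVf // mulrC.
Qed.
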